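(* Let $m\ge 2$ and let $n$ satisfy $2^m\le n<2^m+2^{m-1}-1$. Put $e=n-2^m+1$. Then every $f\in\mathbf{SB}_n$ satisfies $\mathcal{AI}(f)\le 2^{m-1}-1$ or $\deg(\sigma_e f)=2^{m-1}+e$.
   Context: $\mathbf{SB}_n$ is the set of symmetric Boolean functions on $n$ variables; $\sigma_e$ is the $e$-th elementary symmetric function of $x_1,\dots,x_n$ over $\mathbb{F}_2$; $\deg$ is the algebraic degree. The algebraic immunity of $f$ is $\mathcal{AI}(f)=\min\{\deg(g): g\neq0,\ gf=0 \text{ or } g(f+1)=0\}$. *)

(* Defs.v *)
From mathcomp Require Import all_boot fingroup perm.
Set Implicit Arguments. Unset Strict Implicit. Unset Printing Implicit Defensive.

Definition point (n : nat) := {ffun 'I_n -> bool}.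
Definition BF (n : nat) := {ffun point n -> bool}.

Definition supp n (x : point n) : {set 'I_n} := [set i | x i].

(* Evaluation of the algebraic normal form  XOR_{S in A} x^S, where
   x^S = prod_{i in S} x_i = [S \subset supp x]. *)
Definition anf_eval n (A : {set {set 'I_n}}) (x : point n) : bool :=
  odd #|[set S in A | S \subset supp x]|.

(* Algebraic degree: the least degree of a multilinear (ANF) representation
   (the ANF is unique, so this is the degree of the ANF; deg 0 = 0). *)
Definition deg n (f : BF n) : nat :=
  \big[minn/n]_(A : {set {set 'I_n}} | [forall x, anf_eval A x == f x])
     \max_(S in A) #|S|.

Definition sigma n (e : nat) : BF n :=
  [ffun x => anf_eval [set S : {set 'I_n} | #|S| == e] x].

Definition bmul n (f g : BF n) : BF n := [ffun x => f x && g x].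
Definition bnot n (f : BF n) : BF n := [ffun x => ~~ f x].
Definition bzero n : BF n := [ffun _ => false].

Definition symmetricBF n (f : BF n) : Prop :=
  forall (s : {perm 'I_n}) (x : point n), f [ffun i => x (s i)] = f x.

(* Algebraic immunity. The defining set is always nonempty (g = f or g = f+1),
   so the default value n of the min is never used. *)
Definition AI n (f : BF n) : nat :=
  \big[minn/n]_(g : BF n | (g != bzero n) &&
        ((bmul g f == bzero n) || (bmul g (bnot f) == bzero n))) deg g.

(* Main.v *)
Require Import Defs.
From mathcomp Require Import all_boot fingroup perm.
From Stdlib Require Import Lia.
Set Implicit Arguments. Unset Strict Implicit. Unset Printing Implicit Defensive.


Lemma binSS2 a k : 'C(a.+2, k.+2) = 'C(a, k.+2) + 2 * 'C(a, k.+1) + 'C(a, k).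
Proof. by rewrite !binS mul2n -addnn !addnA. Qed.

Lemma lucas_EO a : (forall c, odd 'C(a.*2, c.*2) = odd 'C(a, c)) /\
                   (forall c, odd 'C(a.*2, (c.*2).+1) = false).
Proof.
elim: a => [|a [IHE IHO]].
  by split=> c; rewrite ?bin0n //; case: c.
have ->: (a.+1).*2 = (a.*2).+2 by rewrite doubleS.
split=> [[|c]|[|c]].
- by rewrite !bin0.
- by rewrite doubleS binSS2 !oddD IHO -doubleS !IHE addbF.
- by rewrite bin1 /= odd_double.
- rewrite doubleS -[(c.*2).+3]/((c.*2).+1).+2 binSS2 !oddD -doubleS !IHO.
  by case: (odd _ in X in _ (+) X).
Qed.

Lemma lucas2 a b c d : b < 2 -> d < 2 ->
  odd 'C((a.*2) + b, (c.*2) + d) = odd 'C(a, c) && odd 'C(b, d).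
Proof.
case: b => [|[|//]] _; case: d => [|[|//]] _; rewrite ?addn0 ?addn1.
- by rewrite (proj1 (lucas_EO a)) bin0 andbT.
- by rewrite (proj2 (lucas_EO a)) andbF.
- case: c => [|c]; first by rewrite !bin0.
  rewrite doubleS binS oddD -doubleS (proj1 (lucas_EO a)).
  by rewrite (proj2 (lucas_EO a)) addbF andbT.
- by rewrite binS oddD (proj1 (lucas_EO a)) (proj2 (lucas_EO a)) andbT.
Qed.

Lemma lucas k a b c d : b < 2 ^ k -> d < 2 ^ k ->
  odd 'C(a * 2 ^ k + b, c * 2 ^ k + d) = odd 'C(a, c) && odd 'C(b, d).
Proof.
elim: k b d => [|k IH] b d.
  rewrite expn0 !muln1; case: b => // _; case: d => // _.
  by rewrite !addn0 !bin0 andbT.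
rewrite expnS => hb hd.
have hb2 : b./2 < 2 ^ k by rewrite ltn_half_double -mul2n.
have hd2 : d./2 < 2 ^ k by rewrite ltn_half_double -mul2n.
have eb := odd_double_half b; have ed := odd_double_half d.
have E x y : x * (2 * 2 ^ k) + y = (x * 2 ^ k + y./2).*2 + odd y.
  by rewrite -{1}(odd_double_half y) doubleD -!muln2 -mulnA (mulnC 2) (addnC (odd y)) addnA.
rewrite !E lucas2 ?ltnS ?leq_b1 // IH //.
rewrite -{3}eb -{3}ed addnC (addnC (odd d)) lucas2 ?ltnS ?leq_b1 //.
by rewrite andbA.
Qed.

Lemma sum_bin a : \sum_(j < a.+1) 'C(a, j) = 2 ^ a.
Proof. by rewrite -[2]/(1 + 1) expnDn; apply: eq_bigr => i _; rewrite !exp1n !muln1. Qed.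

Definition Ssum a r := \sum_(j < a.+1) 'C(a, j) * 'C(j, r).

Lemma Ssum_rec a r : Ssum a.+1 r =
  Ssum a r + \sum_(j < a.+1) 'C(a, j) * 'C(j.+1, r).
Proof.
rewrite /Ssum big_ord_recl /=.
under eq_bigr => j _ do rewrite /bump /= add1n binS mulnDl.
rewrite big_split /= addnA; congr (_ + _).
rewrite big_ord_recr /= (bin_small (ltnSn a)) mul0n addn0 [in RHS]big_ord_recl !bin0.
by [].
Qed.

Lemma odd_Ssum a r : odd (Ssum a r) = (a == r).
Proof.
elim: a r => [|a IH] r.
  by rewrite /Ssum big_ord1 bin0 mul1n; case: r.
rewrite Ssum_rec oddD.
case: r => [|r].
  under eq_bigr => j _ do rewrite !bin0 muln1.
  by rewrite sum_bin IH oddX /=; case: a {IH}.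
under eq_bigr => j _ do rewrite binS mulnDr.
rewrite big_split oddD /= -/(Ssum a r.+1) -/(Ssum a r) !IH.
by rewrite addbA addbb eqSS.
Qed.

Lemma odd_Ssum_widen a r N : a < N ->
  odd (\sum_(j < N) 'C(a, j) * 'C(j, r)) = (a == r).
Proof.
move=> aN; rewrite -odd_Ssum /Ssum (big_ord_widen N (fun j => 'C(a, j) * 'C(j, r)) aN).
rewrite [in RHS]big_mkcond /=; congr odd; apply: eq_bigr => j _.
by case: ifP => //; rewrite ltnNge => /negbFE hj; rewrite bin_small.
Qed.

Lemma odd_sumb (I : finType) (P : pred I) (F : I -> nat) :
  odd (\sum_(i | P i) F i) = \big[addb/false]_(i | P i) odd (F i).
Proof. exact: (big_morph odd oddD). Qed.

Lemma odd_card_xor (I : finType) (P : pred I) :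
  odd #|P| = \big[addb/false]_(i | P i) true.
Proof. by rewrite -sum1_card odd_sumb. Qed.

Lemma xor_mkcond (I : finType) (P : pred I) (F : I -> bool) :
  \big[addb/false]_(i | P i) F i = \big[addb/false]_i (P i && F i).
Proof. by rewrite big_mkcond; apply: eq_bigr => i _; case: (P i). Qed.

Definition ptof n (U : {set 'I_n}) : point n := [ffun i => i \in U].

Lemma supp_ptof n (U : {set 'I_n}) : supp (ptof U) = U.
Proof. by apply/setP => i; rewrite /supp inE ffunE. Qed.

Lemma ptof_supp n (x : point n) : ptof (supp x) = x.
Proof. by apply/ffunP => i; rewrite ffunE inE. Qed.

Lemma card_interval (T : finType) (S X : {set T}) : S \subset X ->
  #|[set U : {set T} | S \subset U & U \subset X]| = 2 ^ #|X :\: S|.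
Proof.
move=> SX; rewrite -card_powerset.
have -> : [set U : {set T} | S \subset U & U \subset X] =
          [set S :|: W | W in powerset (X :\: S)].
  apply/setP => U; rewrite inE; apply/andP/imsetP.
    move=> [SU UX]; exists (U :\: S); first by rewrite inE setSD.
    by rewrite setDE setUIr setUCr setIT; apply/esym/setUidPr.
  move=> [W]; rewrite inE => WXS ->; rewrite subsetUl /=.
  by rewrite subUset SX (subset_trans WXS) // subsetDl.
apply: card_in_imset => W1 W2; rewrite !inE => h1 h2 E.
have d1 : W1 :\: S = W1 by apply/setDidPl; move: h1; rewrite subsetD => /andP[].
have d2 : W2 :\: S = W2 by apply/setDidPl; move: h2; rewrite subsetD => /andP[].
by have := congr1 (fun A => A :\: S) E; rewrite /= !setDUl setDv !set0U d1 d2.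
Qed.

Lemma odd_interval (T : finType) (S X : {set T}) : S \subset X ->
  odd #|[set U : {set T} | S \subset U & U \subset X]| = (S == X).
Proof.
move=> SX; rewrite card_interval // oddX orbF cards_eq0 setD_eq0.
by rewrite eqEsubset SX.
Qed.

Definition subsum n (g : BF n) (S : {set 'I_n}) : bool :=
  \big[addb/false]_(U : {set 'I_n} | U \subset S) g (ptof U).

Lemma anf_xor n (A : {set {set 'I_n}}) x :
  anf_eval A x = \big[addb/false]_(S | (S \in A) && (S \subset supp x)) true.
Proof.
rewrite /anf_eval -[#|_|]/#|[pred S | S \in [set S in A | S \subset supp x]]|.
by rewrite odd_card_xor; apply: eq_bigl => S; rewrite !inE.
Qed.

Lemma xor_const (I : finType) (P : pred I) (c : bool) :
  \big[addb/false]_(i | P i) c = c && \big[addb/false]_(i | P i) true.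
Proof. by case: c => //=; rewrite big1. Qed.

Lemma xor_true_eq (I : finType) (P : pred I) (B : {set I}) :
  (forall i, P i = (i \in B)) -> \big[addb/false]_(i | P i) true = odd #|B|.
Proof.
move=> h; rewrite -[#|B|]/#|[pred i | i \in B]| odd_card_xor.
by apply: eq_bigl => i; rewrite h.
Qed.

Lemma deg_lb n (g : BF n) (T : {set 'I_n}) : subsum g T -> #|T| <= deg g.
Proof.
move=> hT; rewrite /deg; apply: (big_ind (fun k => #|T| <= k)).
- by apply: leq_trans (max_card _) _; rewrite card_ord.
- by move=> a b ha hb; rewrite leq_min ha hb.
move=> A /forallP rep; rewrite leqNgt; apply/negP => hlt.
have gU U : g (ptof U) = \big[addb/false]_(S | (S \in A) && (S \subset U)) true.
  by rewrite -(eqP (rep (ptof U))) anf_xor supp_ptof.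
move: hT; rewrite /subsum.
under eq_bigr => U _ do rewrite gU.
rewrite (exchange_big_dep (fun S => S \in A)) /=; last by move=> U S _ /andP[].
rewrite big1 // => S SA.
rewrite xor_const /=.
case: (boolP (S \subset T)) => ST.
  rewrite (@xor_true_eq _ _ [set U : {set 'I_n} | S \subset U & U \subset T]); last first.
    by move=> U; rewrite !inE SA /= andbC.
  rewrite odd_interval //; apply/negP => /eqP ST'.
  have : #|S| <= \max_(S0 in A) #|S0| by apply: leq_bigmax_cond.
  by rewrite ST' leqNgt hlt.
rewrite big_pred0 // => U; rewrite SA /=.
apply/negP => /andP[UT SU]; by rewrite (subset_trans SU UT) in ST.
Qed.

Definition mob n (g : BF n) : {set {set 'I_n}} := [set S | subsum g S].

Lemma mob_rep n (g : BF n) x : anf_eval (mob g) x = g x.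
Proof.
rewrite anf_xor.
have -> : \big[addb/false]_(S : {set 'I_n} | (S \in mob g) && (S \subset supp x)) true =
          \big[addb/false]_(S : {set 'I_n} | S \subset supp x) subsum g S.
  rewrite xor_mkcond [RHS]xor_mkcond; apply: eq_bigr => S _.
  by rewrite inE; case: (S \subset supp x); case: (subsum g S).
rewrite /subsum (exchange_big_dep (fun U : {set 'I_n} => U \subset supp x)) /=; last first.
  by move=> S U SX US; apply: subset_trans US SX.
under eq_bigr => U UX do rewrite xor_const.
rewrite (bigD1 (supp x)) //= [X in _ (+) X]big1 ?addbF.
  rewrite ptof_supp; case: (g x) => //=.
  rewrite (@xor_true_eq _ _ [set S : {set 'I_n} | supp x \subset S & S \subset supp x]).
    by rewrite odd_interval ?eqxx.
  by move=> S; rewrite !inE andbC.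
move=> U /andP[UX Un]; case: (g (ptof U)) => //=.
rewrite (@xor_true_eq _ _ [set S : {set 'I_n} | U \subset S & S \subset supp x]).
  by rewrite odd_interval // (negbTE Un).
by move=> S; rewrite !inE andbC.
Qed.

Lemma bigmin_seq_le (I : eqType) (r : seq I) (P : pred I) (F : I -> nat) d j :
  j \in r -> P j -> \big[minn/d]_(i <- r | P i) F i <= F j.
Proof.
elim: r => //= i r IH; rewrite in_cons big_cons => /orP[/eqP-> Pj | jr Pj].
  by rewrite Pj geq_minl.
by case: (P i); [rewrite geq_min IH ?orbT | exact: IH].
Qed.

Lemma bigmin_le (I : finType) (P : pred I) (F : I -> nat) d j :
  P j -> \big[minn/d]_(i | P i) F i <= F j.
Proof. by move=> Pj; apply: bigmin_seq_le (mem_index_enum j) Pj. Qed.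

Lemma deg_ub n (g : BF n) D :
  (forall S : {set 'I_n}, D < #|S| -> subsum g S = false) -> deg g <= D.
Proof.
move=> h; rewrite /deg; apply: leq_trans (bigmin_le _ _ (j := mob g) _) _.
  by apply/forallP => x; rewrite mob_rep.
apply/bigmax_leqP => S; rewrite inE => hS.
by rewrite leqNgt; apply/negP => /h; rewrite hS.
Qed.

Lemma subsum_sym n (g : BF n) (G : nat -> bool) (S : {set 'I_n}) :
  (forall U, g (ptof U) = G #|U|) ->
  subsum g S = \big[addb/false]_(j < #|S|.+1) (odd 'C(#|S|, j) && G j).
Proof.
move=> hg; rewrite /subsum.
under eq_bigr => U _ do rewrite hg.
rewrite (partition_big (fun U : {set 'I_n} => (inord #|U| : 'I_(#|S|.+1))) xpredT) //=.
apply: eq_bigr => j _.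
rewrite (eq_bigr (fun _ => G j)); last first.
  by move=> U /andP[US /eqP <-]; rewrite inordK // ltnS subset_leq_card.
rewrite (@xor_const _ (fun U : {set 'I_n} => (U \subset S) && (inord #|U| == j)) (G j)) andbC; congr andb.
rewrite (@xor_true_eq _ _ [set U : {set 'I_n} | U \subset S & #|U| == j]).
  by rewrite cards_draws.
move=> U; rewrite !inE; case: (boolP (U \subset S)) => //= US.
rewrite -val_eqE /= inordK // ltnS; exact: subset_leq_card.
Qed.

Lemma perm_sets (T : finType) k : forall A B : {set T}, #|A| = k -> #|B| = k ->
  exists s : {perm T}, forall i, (s i \in B) = (i \in A).
Proof.
elim: k => [|k IH] A B hA hB.
  move/eqP: hA; rewrite cards_eq0 => /eqP ->; move/eqP: hB; rewrite cards_eq0 => /eqP ->.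
  by exists 1%g => i; rewrite !inE.
have /set0Pn [a aA] : A != set0 by rewrite -card_gt0 hA.
have /set0Pn [b bB] : B != set0 by rewrite -card_gt0 hB.
have hA' : #|A :\ a| = k by move: hA; rewrite (cardsD1 a) aA add1n => -[].
have hB' : #|B :\ b| = k by move: hB; rewrite (cardsD1 b) bB add1n => -[].
have [s hs] := IH _ _ hA' hB'.
exists (s * tperm (s a) b)%g => i; rewrite permM.
have hsa : s a \notin B :\ b by rewrite hs !inE eqxx.
case: (eqVneq i a) => [->|ia]; first by rewrite tpermL aA.
have sia : s i != s a by apply: contraNneq ia => /perm_inj ->.
case: (eqVneq (s i) b) => [sib|sib].
  rewrite sib tpermR.
  have : s i \notin B :\ b by rewrite sib !inE eqxx.
  rewrite hs !inE ia /= => /negbTE ->.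
  have sab : s a != b by rewrite -sib eq_sym.
  by move: hsa; rewrite !inE sab /= => /negbTE.
rewrite tpermD; try by rewrite eq_sym.
by move: (hs i); rewrite !inE sib ia.
Qed.

Lemma sym_wt n (f : BF n) (x y : point n) : symmetricBF f ->
  #|supp x| = #|supp y| -> f x = f y.
Proof.
move=> hf hc; have [s hs] := perm_sets hc (erefl _).
rewrite -(hf s y); apply: f_equal; apply/ffunP => i; rewrite ffunE.
by move: (hs i); rewrite !inE.
Qed.

Definition valw n (f : BF n) (w : nat) : bool :=
  if [pick U : {set 'I_n} | #|U| == w] is Some U then f (ptof U) else false.

Lemma valwE n (f : BF n) U : symmetricBF f -> f (ptof U) = valw f #|U|.
Proof.
move=> hf; rewrite /valw; case: pickP => [V /eqP hV | /(_ U)]; last by rewrite eqxx.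
by apply: sym_wt => //; rewrite !supp_ptof hV.
Qed.

Lemma valwE' n (f : BF n) x : symmetricBF f -> f x = valw f #|supp x|.
Proof. by move=> hf; rewrite -valwE // ptof_supp. Qed.

Lemma sigmaE n e x : sigma n e x = odd 'C(#|supp x|, e).
Proof.
rewrite /sigma ffunE /anf_eval -cards_draws; congr odd.
by apply: eq_card => S; rewrite !inE andbC.
Qed.

Lemma xor_widen M N (T : nat -> bool) : M <= N ->
  (forall j, M <= j -> T j = false) ->
  \big[addb/false]_(j < M) T j = \big[addb/false]_(j < N) T j.
Proof.
move=> MN hT; rewrite (big_ord_widen N T MN) big_mkcond /=.
apply: eq_bigr => j _; case: ifP => // /negbT; rewrite -leqNgt => /hT ->.
by [].
Qed.

Lemma odd_xor_Ssum a r N : a < N ->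
  \big[addb/false]_(j < N) (odd 'C(a, j) && odd 'C(j, r)) = (a == r).
Proof.
move=> aN; rewrite -(odd_Ssum_widen r aN) odd_sumb.
by apply: eq_bigr => j _; rewrite oddM.
Qed.

Lemma oddC_le a b : odd 'C(a, b) -> b <= a.
Proof. by rewrite leqNgt; apply: contraL => /bin_small ->. Qed.

Lemma oddC_antisym a b : odd 'C(a, b) && odd 'C(b, a) = (a == b).
Proof.
apply/andP/eqP => [[/oddC_le h1 /oddC_le h2]|->]; first by apply/eqP; rewrite eqn_leq h1 h2.
by rewrite binn.
Qed.

Lemma lucas0 k w j : j < 2 ^ k ->
  odd 'C(w, j) = odd 'C(w %% 2 ^ k, j).
Proof.
move=> hj; rewrite {1}(divn_eq w (2 ^ k)) -[j]/(0 * 2 ^ k + j) lucas ?ltn_pmod ?expn_gt0 //.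
by rewrite bin0.
Qed.

Lemma split_sum k t e (V : nat -> bool) : t < 2 ^ k -> e < 2 ^ k ->
  \big[addb/false]_(j < (2 ^ k + t).+1) (odd 'C(2 ^ k + t, j) && (odd 'C(j, e) && V j)) =
  \big[addb/false]_(d < 2 ^ k) (odd 'C(t, d) && odd 'C(d, e) && (V d (+) V (2 ^ k + d))).
Proof.
move=> ht he; set h := 2 ^ k.
have hh : 0 < h by rewrite expn_gt0.
have lucA d : d < h -> odd 'C(h + t, d) = odd 'C(t, d).
  by move=> hd; have := lucas 1 0 ht hd; rewrite mul1n mul0n add0n bin0.
have lucB d : d < h -> odd 'C(h + t, h + d) = odd 'C(t, d).
  by move=> hd; have := lucas 1 1 ht hd; rewrite mul1n binn.
have lucC d : d < h -> odd 'C(h + d, e) = odd 'C(d, e).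
  by move=> hd; have := lucas 1 0 hd he; rewrite mul1n mul0n add0n bin0.
rewrite (@xor_widen _ (h + h) (fun j => odd 'C(h + t, j) && (odd 'C(j, e) && V j))) ?addnS ?ltn_add2l //; last first.
  by move=> j hj; rewrite bin_small.
rewrite big_split_ord /= -big_split /=.
apply: eq_bigr => d _.
rewrite lucA // lucB // lucC //.
by case: (odd 'C(t, d)); case: (odd 'C(d, e)); case: (V d); case: (V (h + d)).
Qed.

Lemma resid_rep k n r (x : point n) : r < 2 ^ k ->
  anf_eval [set S : {set 'I_n} | (#|S| < 2 ^ k) && odd 'C(#|S|, r)] x =
  (#|supp x| %% 2 ^ k == r).
Proof.
move=> hr; set h := 2 ^ k.
have hh : 0 < h by rewrite expn_gt0.
pose G j := (j < h) && odd 'C(j, r).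
pose g : BF n := [ffun y => G #|supp y|].
have -> : anf_eval [set S : {set 'I_n} | (#|S| < h) && odd 'C(#|S|, r)] x = subsum g (supp x).
  rewrite anf_xor /subsum xor_mkcond [RHS]xor_mkcond; apply: eq_bigr => S _.
  by rewrite ffunE supp_ptof inE andbT andbC.
rewrite (@subsum_sym _ g G) => [|U]; last by rewrite ffunE supp_ptof.
set w := #|supp x|.
rewrite (@xor_widen _ (w + h) (fun j => odd 'C(w, j) && G j)); last 2 first.
- by rewrite -{1}(addn0 w) ltn_add2l.
- by move=> j hj; rewrite bin_small.
rewrite (@eq_bigr _ _ _ _ _ _ _ (fun j : 'I_(w + h) => odd 'C(w %% h, j) && odd 'C(j, r))); last first.
  move=> j _; rewrite /G; case: (ltnP j h) => hj /=.
    by rewrite (lucas0 w hj).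
  rewrite andbF; apply/esym/negbTE; rewrite negb_and; apply/orP; left.
  rewrite bin_small //; apply: leq_trans hj; exact: ltn_pmod.
rewrite -(@xor_widen h (w + h) (fun j => odd 'C(w %% h, j) && odd 'C(j, r))).
- by rewrite odd_xor_Ssum // ltn_pmod.
- exact: leq_addl.
- by move=> j hj; rewrite bin_small // (leq_trans _ hj) // ltn_pmod.
Qed.

Ltac nlia :=
  try (apply/leP);
  repeat match goal with H : is_true (_ <= _) |- _ => move/leP: H
                        | H : @eq nat _ _ |- _ => move: H end;
  rewrite -?plusE -?minusE -?multE; intros; lia.

Lemma exists_set n w : w <= n -> exists U : {set 'I_n}, #|U| = w.
Proof.
move=> hw.
have : 0 < #|[set A : {set 'I_n} | #|A| == w]| by rewrite card_draws card_ord bin_gt0.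
by rewrite card_gt0 => /set0Pn [U]; rewrite inE => /eqP; exists U.
Qed.

Lemma wt_le n (x : point n) : #|supp x| <= n.
Proof. by apply: leq_trans (max_card _) _; rewrite card_ord. Qed.

Theorem theorem5 (m n : nat) (f : BF n) :
  2 <= m -> 2 ^ m <= n -> n < 2 ^ m + 2 ^ (m - 1) - 1 ->
  symmetricBF f ->
  AI f <= 2 ^ (m - 1) - 1 \/
  deg (bmul (sigma n (n - 2 ^ m + 1)) f) = 2 ^ (m - 1) + (n - 2 ^ m + 1).
Proof.
move=> hm2 H1 H2 hf.
set h := 2 ^ (m - 1) in H2 *.
have hm : 2 ^ m = h + h.
  by rewrite /h -{1}(subnK (ltnW hm2)) expnD expn1 muln2 -addnn.
rewrite hm in H1 H2 *.
set e := n - (h + h) + 1.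
have heh : e < h by rewrite /e; nlia.
have he1 : 0 < e by rewrite /e addn1.
set V := valw f.
have hV x : f x = V #|supp x| by apply: valwE'.
case: (boolP [exists r : 'I_h, (e <= r) && (V r == V (r + h))]).
  move=> /existsP [r /andP [er /eqP hr]]; left.
  have hrh : r < h := ltn_ord r.
  have hwt (x : point n) : #|supp x| %% h == r -> #|supp x| = r \/ #|supp x| = r + h.
    move=> /eqP hx; have := divn_eq #|supp x| h; rewrite hx.
    have := wt_le x; case: (#|supp x| %/ h) => [|[|q]].
    - by rewrite mul0n add0n; left.
    - by rewrite mul1n addnC; right.
    - rewrite !mulSn => hle heq; exfalso; rewrite /e in er; nlia.
  pose g : BF n := [ffun x => #|supp x| %% h == r].
  have [U0 hU0] : exists U : {set 'I_n}, #|U| = r by apply: exists_set; nlia.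
  have gnz : g != bzero n.
    apply/negP => /eqP /ffunP /(_ (ptof U0)); rewrite !ffunE supp_ptof hU0.
    by rewrite modn_small // eqxx.
  have hann : (bmul g f == bzero n) || (bmul g (bnot f) == bzero n).
    case hvr : (V r); [apply/orP; right | apply/orP; left];
      apply/eqP/ffunP => x; rewrite !ffunE;
      (case: (boolP (#|supp x| %% h == r)) => //= hx);
      rewrite hV; by case: (hwt x hx) => ->; rewrite -?hr hvr.
  apply: leq_trans (bigmin_le _ _ (j := g) _) _; first by rewrite gnz hann.
  rewrite /deg.
  apply: leq_trans (bigmin_le _ _ (j := [set S : {set 'I_n} | (#|S| < h) && odd 'C(#|S|, r)]) _) _.
    by apply/forallP => x; rewrite resid_rep // ffunE.
  apply/bigmax_leqP => S; rewrite inE => /andP[hS _].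
  by rewrite -ltnS subn1 prednK // (leq_ltn_trans _ hrh).
move/existsPn => hB; right.
have hV2 d : e <= d -> d < h -> V d (+) V (h + d) = true.
  move=> ed dh; have := hB (Ordinal dh); rewrite /= ed /= addnC.
  by case: (V d); case: (V (h + d)).
pose G j := odd 'C(j, e) && V j.
have hg U : bmul (sigma n e) f (ptof U) = G #|U|.
  by rewrite ffunE sigmaE hV supp_ptof.
have hk : h = 2 ^ (m - 1) by [].
apply/anti_leq/andP; split.
  apply: deg_ub => S hS.
  rewrite (subsum_sym _ hg).
  have hSn : #|S| <= n by apply: leq_trans (max_card _) _; rewrite card_ord.
  case: (ltnP #|S| (h + h)) => hS2.
    have [t ht] : exists t, #|S| = h + t by exists (#|S| - h); nlia.
    have th : t < h by nlia.
    have et : e < t by nlia.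
    rewrite ht split_sum //.
    rewrite (@eq_bigr _ _ _ _ _ _ _ (fun d : 'I_h => odd 'C(t, d) && odd 'C(d, e))).
      by rewrite odd_xor_Ssum // gtn_eqF.
    move=> d _; case hde : (odd 'C(d, e)); last by rewrite andbF.
    by rewrite hV2 ?andbT // (oddC_le hde).
  have [t ht] : exists t, #|S| = 2 * h + t by exists (#|S| - (h + h)); nlia.
  have te : t < e by rewrite /e; nlia.
  have th : t < h by nlia.
  rewrite big1 // => j _; rewrite /G; move: (nat_of_ord j) => {}j.
  case hje : (odd 'C(j, e)); last by rewrite andbF.
  rewrite (lucas0 j heh) in hje.
  rewrite ht {1}(divn_eq j h) lucas // ?ltn_pmod // ?expn_gt0 //.
  case hjt : (odd 'C(t, j %% h)); first by move: (leq_trans (oddC_le hje) (oddC_le hjt)); rewrite leqNgt te.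
  by rewrite andbF.
have [T hT] : exists T : {set 'I_n}, #|T| = h + e by apply: exists_set; rewrite /e; nlia.
rewrite -hT; apply: deg_lb.
rewrite (subsum_sym _ hg) hT split_sum //.
rewrite (bigD1 (Ordinal heh)) //= binn hV2 // [X in _ (+) X]big1 //.
move=> d hd; rewrite oddC_antisym.
by case: (eqVneq e d) => // hde; move: hd; rewrite -val_eqE /= -hde eqxx.
Qed.
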